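(* Let $N\geq 0$ be an integer and let $x, y_1,\dots,y_N$ be pairwise commuting elements of an algebra. Then \[ \sum_{n_0, \dots, n_N\geq 0} \frac{x^{n_0} (x+y_1)^{n_1} \cdots (x+y_N)^{n_N}}{(n_0 + \dots + n_N+N)!} = e^x \sum_{n_1, \dots, n_N\geq 0} \frac{y_1^{n_1} \cdots y_N^{n_N}}{\left( \sum_{i=1}^N (n_i+1) \right)!}, \] where $e^x=\sum_{n\geq 0} x^n/n!$.
   Context: The infinite sums are understood as (formal) power series in the commuting elements $x,y_1,\dots,y_N$; for $N=0$ the right-hand sum is the empty-product term $1/0!=1$, so the identity reads $\sum_{n_0} x^{n_0}/n_0! = e^x$. *)

(* Defs.v *)
(* Formal power series in n commuting variables with
   rational coefficients, encoded coefficientwise. *)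
From mathcomp Require Import all_boot all_order all_algebra.
Unset Printing Implicit Defensive.
Import Order.TTheory GRing.Theory Num.Theory.
Local Open Scope ring_scope.

Definition mono (n : nat) := {ffun 'I_n -> nat}.
Definition mdeg {n} (m : mono n) : nat := (\sum_(i < n) m i)%N.
Definition mono0 n : mono n := [ffun => 0%N].

Definition ps (n : nat) := mono n -> rat.

Definition ps_one n : ps n := fun m => (m == mono0 n)%:R.
Definition ps_var {n} (i : 'I_n) : ps n :=
  fun m => (m == [ffun j => nat_of_bool (j == i)])%:R.
Definition ps_add {n} (s t : ps n) : ps n := fun m => s m + t m.
Definition ps_scale {n} (c : rat) (s : ps n) : ps n := fun m => c * s m.
Definition ps_mul {n} (s t : ps n) : ps n := fun m =>
  \sum_(d : {ffun 'I_n -> 'I_(mdeg m).+1} | [forall i, (d i <= m i)%N])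
     s [ffun i => nat_of_ord (d i)] * t [ffun i => (m i - d i)%N].
Definition ps_pow {n} (s : ps n) (k : nat) : ps n := iter k (ps_mul s) (ps_one n).

Definition has_sum {n} {I : eqType} (F : I -> ps n) (S : ps n) : Prop :=
  forall m, exists s : seq I,
    [/\ uniq s, (forall i, F i m != 0 -> i \in s) & S m = \sum_(i <- s) F i m].

(* Variables: index ord0 is x, index (lift ord0 i) is y_(i+1), i : 'I_N. *)
Definition vx N : ps N.+1 := ps_var ord0.
Definition vy {N} (i : 'I_N) : ps N.+1 := ps_var (lift ord0 i).

Definition lhs_term N (k : {ffun 'I_N.+1 -> nat}) : ps N.+1 :=
  ps_scale ((((\sum_(j < N.+1) k j) + N)`!)%:R^-1)
    (ps_mul (ps_pow (vx N) (k ord0))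
       (\big[@ps_mul N.+1/ps_one N.+1]_(i < N)
           ps_pow (ps_add (vx N) (vy i)) (k (lift ord0 i)))).

Definition exp_term N (k : nat) : ps N.+1 :=
  ps_scale ((k`!)%:R^-1) (ps_pow (vx N) k).

Definition rhs_term N (k : {ffun 'I_N -> nat}) : ps N.+1 :=
  ps_scale (((\sum_(i < N) (k i).+1)`!)%:R^-1)
    (\big[@ps_mul N.+1/ps_one N.+1]_(i < N) ps_pow (vy i) (k i)).

(* Main.v *)
Require Import Defs.
From mathcomp Require Import all_boot all_order all_algebra.
From mathcomp Require Import mpoly.
From mathcomp Require Import ring.
Import GRing.Theory Num.Theory.
Local Open Scope ring_scope.



Definition A (b T : nat) : {poly rat} := \sum_(c < T) ('C(b + c, c))%:R *: 'X^c.
Definition eqm (e : nat) (p q : {poly rat}) := 'X^e %| p - q.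

Lemma eqm_refl e p : eqm e p p.
Proof. by rewrite /eqm subrr dvdp0. Qed.
Lemma eqm_sym e p q : eqm e p q -> eqm e q p.
Proof. by rewrite /eqm -dvdpNr opprB. Qed.
Lemma eqm_trans e p q r : eqm e p q -> eqm e q r -> eqm e p r.
Proof.
move=> h1 h2; have := dvdp_add h1 h2; rewrite /eqm.
by have -> : p - q + (q - r) = p - r by ring.
Qed.
Lemma eqm_mul e p q r s : eqm e p q -> eqm e r s -> eqm e (p * r) (q * s).
Proof.
move=> h1 h2; have := dvdp_add (dvdp_mull r h1) (dvdp_mull q h2); rewrite /eqm.
by have -> : r * (p - q) + q * (r - s) = p * r - q * s by ring.
Qed.
Arguments eqm_sym {e p q}. Arguments eqm_trans {e p q r}. Arguments eqm_mul {e p q r s}.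
Lemma eqm_coef e p q j : eqm e p q -> (j < e)%N -> p`_j = q`_j.
Proof.
move=> /divpK h hj; apply/eqP; rewrite -subr_eq0 -coefB -h coefMXn hj //.
Qed.

Lemma A_S b T : A b T.+1 = A b T + ('C(b + T, T))%:R *: 'X^T.
Proof. by rewrite /A big_ord_recr. Qed.

Lemma A_rec b T : (1 - 'X) * A b.+1 T.+1 = A b T.+1 - ('C(b.+1 + T, T))%:R *: 'X^(T.+1).
Proof.
elim: T => [|T IH].
  rewrite /A !big_ord1 /= !addn0 !bin0 !scale1r expr0 expr1 mulr1; ring.
have hb : ('C(b.+1 + T.+1, T.+1))%:R = ('C(b + T.+1, T.+1))%:R + ('C(b.+1+T, T))%:R :> rat.
  by rewrite -natrD addnS binS addSnnS.
rewrite A_S mulrDr IH [in RHS]A_S hb -!mul_polyC.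
move: ('C(b + T.+1, T.+1))%:R ('C(b.+1+T, T))%:R => x y.
rewrite !rmorphD /= !exprS; ring.
Qed.

Lemma A0 T : (1 - 'X) * A 0 T = 1 - 'X^T.
Proof.
elim: T => [|T IH]; first by rewrite /A big_ord0 mulr0 expr0 subrr.
rewrite A_S mulrDr IH add0n binn scale1r exprS; ring.
Qed.

Lemma A_inv e b T : (0 < e)%N -> (e <= T)%N -> eqm e ((1 - 'X)^+b.+1 * A b T) 1.
Proof.
move=> he heT; elim: b => [|b IH].
  rewrite expr1 A0 /eqm; have -> : 1 - 'X^T - 1 = - ('X^T : {poly rat}) by ring.
  by rewrite dvdpNr dvdp_exp2l.
case: T heT IH => [|T] heT IH; first by move: (leq_trans he heT).
rewrite exprSr -mulrA A_rec mulrBr; apply: eqm_trans IH.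
rewrite /eqm; have -> : forall x y : {poly rat}, x - y - x = - y by move=> *; ring.
by rewrite dvdpNr -mul_polyC mulrA; apply: dvdp_mull; apply: dvdp_exp2l.
Qed.

Lemma vander n (bs Ts : 'I_n.+1 -> nat) e : (0 < e)%N -> (forall i, (e <= Ts i)%N) ->
  eqm e (\prod_i A (bs i) (Ts i)) (A (\sum_i bs i + n) e).
Proof.
move=> he hT; set U : {poly rat} := 1 - 'X.
set Q := \prod_i _; set B := (\sum_i bs i + n)%N.
have hS : (\sum_i (bs i).+1 = B.+1)%N.
  rewrite (eq_bigr (fun i => bs i + 1)%N); last by move=> i _; rewrite addn1.
  by rewrite /B big_split /= sum_nat_const card_ord muln1 addnS.
have h1 : eqm e (U ^+ B.+1 * Q) 1.
  rewrite -hS -prodrXr /Q -big_split /=.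
  apply: (big_ind (fun p => eqm e p 1)); first exact: eqm_refl.
    by move=> p q hp hq; rewrite -[1]mul1r; apply: eqm_mul.
  by move=> i _; apply: A_inv.
have h2 : eqm e (U ^+ B.+1 * A B e) 1 by apply: A_inv.
have : eqm e (Q * (U ^+ B.+1 * A B e)) ((U ^+ B.+1 * Q) * A B e).
  by rewrite mulrA [Q * _]mulrC; apply: eqm_refl.
move=> h3.
have h4 : eqm e Q (Q * (U ^+ B.+1 * A B e)).
  by rewrite -{1}[Q]mulr1; apply: (eqm_mul (eqm_refl e Q) (eqm_sym h2)).
have h5 : eqm e ((U ^+ B.+1 * Q) * A B e) (A B e).
  by rewrite -{2}[A B e]mul1r; apply: eqm_mul h1 (eqm_refl _ _).
exact: eqm_trans (eqm_trans h4 h3) h5.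
Qed.

Arguments eqm_coef {e p q j}.
Arguments vander {n} bs Ts {e}.
Lemma A_coef b T j : (j < T)%N -> (A b T)`_j = ('C(b + j, j))%:R.
Proof.
move=> hj; rewrite /A coef_sum (bigD1 (Ordinal hj)) //= coefZ coefXn eqxx mulr1.
rewrite big1 ?addr0 // => i /eqP hi; rewrite coefZ coefXn.
case: eqP => [hij|]; last by rewrite mulr0.
by case: hi; apply: val_inj.
Qed.

Definition toM {n} (m : mono n) : 'X_{1..n} := [multinom m i | i < n].
Definition phi {n} (p : {mpoly rat[n]}) : ps n := fun m => p@_(toM m).

Lemma mdegE' n (m : mono n) : mpoly.mdeg (toM m) = Defs.mdeg m.
Proof. by rewrite mdegE; apply: eq_bigr => i _; rewrite mnmE. Qed.

Lemma mulE n (p q : {mpoly rat[n]}) m : (p * q)@_(toM m) = 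
  \sum_(k : 'X_{1..n < (Defs.mdeg m).+1} | (k <= toM m)%MM) p@_k * q@_(toM m - k).
Proof. by apply: (@mcoeff_poly_mul_lin _ _ p q (toM m) (Defs.mdeg m).+1); rewrite mdegE'. Qed.

Lemma bmnm_lt n b (k : 'X_{1..n < b}) i : (k i < b)%N.
Proof.
case: k => k /= hk; apply: leq_ltn_trans hk; rewrite mdegE.
by rewrite (bigD1 i) //= leq_addr.
Qed.

Lemma phi_mul n (p q : {mpoly rat[n]}) m : ps_mul (phi p) (phi q) m = phi (p * q) m.
Proof.
rewrite /phi mulE /ps_mul.
set b := (Defs.mdeg m).+1.
pose h (k : 'X_{1..n < b}) : {ffun 'I_n -> 'I_b} := [ffun i => inord (k i)].
pose h' (d : {ffun 'I_n -> 'I_b}) : 'X_{1..n < b} := insubd bm0 (toM [ffun i => nat_of_ord (d i)]).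
have hv k i : nat_of_ord (h k i) = k i by rewrite ffunE inordK // bmnm_lt.
have hM k : toM [ffun i => nat_of_ord (h k i)] = k.
  by apply/mnmP => i; rewrite mnmE ffunE hv.
rewrite (reindex_onto h h').
  apply: eq_big => [k|k /andP[_ /eqP hk]]; last first.
    rewrite hM; congr (_ * q@_ _); apply/mnmP => i.
    by rewrite mnmBE !mnmE !ffunE inordK // bmnm_lt.
  apply/andP/mnm_lepP => [[/forallP H _] i|H].
    by rewrite mnmE -hv; apply: H.
  have Hd : forall i, (h k i <= m i)%N by move=> i; rewrite hv; have := H i; rewrite mnmE.
  split; first by apply/forallP.
  apply/eqP; apply: val_inj; rewrite /h' val_insubd hM.
  by case: k {H Hd} => k /= ->.
move=> d /forallP Hd; apply/ffunP => i; rewrite ffunE; apply: val_inj => /=.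
have Hb : (mpoly.mdeg (toM [ffun i => nat_of_ord (d i)]) < b)%N.
  rewrite mdegE' ltnS /Defs.mdeg; apply: leq_sum => j _; rewrite ffunE; exact: Hd.
have E : bmnm (insubd (bm0 : 'X_{1..n<b}) (toM [ffun i => nat_of_ord (d i)])) = toM [ffun i => nat_of_ord (d i)].
  by rewrite insubdK.
by rewrite /h' E mnmE ffunE inordK.
Qed.

Definition rel {n} (s : ps n) (p : {mpoly rat[n]}) := forall m, s m = phi p m.

Lemma toM_eq n (m : mono n) u : (toM m == u) = (m == [ffun i => u i]).
Proof.
apply/eqP/eqP => [<-|->]; first by apply/ffunP => i; rewrite ffunE mnmE.
by apply/mnmP => i; rewrite mnmE ffunE.
Qed.

Lemma rel_one n : rel (ps_one n) 1.
Proof.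
move=> m; rewrite /phi mcoeff1 /ps_one toM_eq; congr (nat_of_bool _)%:R.
by congr (m == _); apply/ffunP => i; rewrite !ffunE mnm0E.
Qed.

Lemma rel_var n (i : 'I_n) : rel (ps_var i) 'X_i.
Proof.
move=> m; rewrite /phi mcoeffX /ps_var (eq_sym (U_(i)%MM)) toM_eq.
have -> : [ffun i0 => (U_(i)%MM : 'X_{1..n}) i0] = [ffun j => nat_of_bool (j == i)] :> mono n.
  by apply/ffunP => j; rewrite !ffunE mnm1E eq_sym.
by [].
Qed.

Lemma rel_add n (s t : ps n) p q : rel s p -> rel t q -> rel (ps_add s t) (p + q).
Proof. by move=> hs ht m; rewrite /ps_add /phi mcoeffD hs ht. Qed.

Lemma rel_scale n c (s : ps n) p : rel s p -> rel (ps_scale c s) (c *: p).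
Proof. by move=> hs m; rewrite /ps_scale /phi mcoeffZ hs. Qed.

Lemma rel_mul n (s t : ps n) p q : rel s p -> rel t q -> rel (ps_mul s t) (p * q).
Proof.
move=> hs ht m; rewrite -phi_mul /ps_mul; apply: eq_bigr => d _.
by rewrite hs ht.
Qed.

Lemma rel_pow n (s : ps n) p k : rel s p -> rel (ps_pow s k) (p ^+ k).
Proof.
move=> hs; elim: k => [|k IH]; first exact: rel_one.
by rewrite exprS; apply: rel_mul.
Qed.

Lemma rel_prod n N (F : 'I_N -> ps n) G : (forall i, rel (F i) (G i)) ->
  rel (\big[@ps_mul n/ps_one n]_(i < N) F i) (\prod_(i < N) G i).
Proof.
move=> h; apply: (big_ind2 rel); first exact: rel_one.
  by move=> *; apply: rel_mul.
by move=> i _; apply: h.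
Qed.

Lemma Xpow n (u : 'I_n) k : ('X_u : {mpoly rat[n]}) ^+ k = 'X_[U_(u) *+ k].
Proof. by rewrite mpolyXn. Qed.

Lemma exp_binom n (u v : 'I_n) (e K : nat) : (e < K)%N ->
  ('X_u + 'X_v : {mpoly rat[n]}) ^+ e =
  \sum_(j < K) ('C(e, j))%:R *: 'X_[U_(u) *+ (e - j) + U_(v) *+ j].
Proof.
move=> hK; rewrite exprDn (@big_ord_widen _ 0 +%R e.+1 K (fun j => 'X_u ^+ (e - j) * 'X_v ^+ j *+ 'C(e, j))) //.
rewrite big_mkcond /=; apply: eq_bigr => j _.
rewrite mpolyXD -!Xpow scaler_nat; case: ifP => // /negbT; rewrite -leqNgt => hj.
by rewrite bin_small.
Qed.

Lemma prod_sX n (I : finType) (c : I -> rat) (m : I -> 'X_{1..n}) :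
  \prod_i (c i *: 'X_[m i] : {mpoly rat[n]}) = (\prod_i c i) *: 'X_[(\sum_i m i)%MM].
Proof.
apply: (big_rec3 (fun p (a : rat) (mm : 'X_{1..n}) => p = a *: 'X_[mm])).
  by rewrite mpolyX0 scale1r.
move=> i p a mm _ ->; rewrite mpolyXD -scalerAl -scalerAr scalerA //.
Qed.

Definition mon N k0 (ns : 'I_N -> nat) K (g : {ffun 'I_N -> 'I_K}) : 'X_{1..N.+1} :=
  (U_(ord0) *+ k0 + \sum_i (U_(ord0) *+ (ns i - g i) + U_(lift ord0 i) *+ g i))%MM.

Arguments mon {N} k0 ns {K} g.

Lemma core_exp N k0 (ns : 'I_N -> nat) K : (forall i, ns i < K)%N ->
  ('X_ord0 ^+ k0 * \prod_i ('X_ord0 + 'X_(lift ord0 i)) ^+ ns i : {mpoly rat[N.+1]}) =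
  \sum_(g : {ffun 'I_N -> 'I_K}) (\prod_i ('C(ns i, g i))%:R) *: 'X_[mon k0 ns g].
Proof.
move=> hK; rewrite (eq_bigr _ (fun i _ => @exp_binom N.+1 ord0 (lift ord0 i) _ _ (hK i))).
rewrite bigA_distr_bigA /= mulr_sumr; apply: eq_bigr => g _.
by rewrite prod_sX Xpow -scalerAr -mpolyXD.
Qed.

Lemma lift0_neq N (i : 'I_N) : (lift ord0 i == ord0) = false.
Proof. by rewrite eq_sym (negbTE (neq_lift _ _)). Qed.
Lemma lift0_neq' N (i : 'I_N) : (ord0 == lift ord0 i) = false.
Proof. by rewrite (negbTE (neq_lift _ _)). Qed.

Lemma mon_x0 N k0 (ns : 'I_N -> nat) K (g : {ffun 'I_N -> 'I_K}) :
  mon k0 ns g ord0 = (k0 + \sum_i (ns i - g i))%N.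
Proof.
rewrite /mon mnmDE mulmnE mnm1E eqxx mul1n mnm_sumE; congr (_ + _)%N.
apply: eq_bigr => i _; rewrite mnmDE !mulmnE !mnm1E eqxx lift0_neq.
by rewrite mul1n mul0n addn0.
Qed.

Lemma mon_l N k0 (ns : 'I_N -> nat) K (g : {ffun 'I_N -> 'I_K}) i :
  mon k0 ns g (lift ord0 i) = g i.
Proof.
rewrite /mon mnmDE mulmnE mnm1E lift0_neq' mul0n add0n mnm_sumE.
rewrite (bigD1 i) //= big1 => [|j hj]; rewrite mnmDE !mulmnE !mnm1E lift0_neq'.
  by rewrite eqxx mul0n mul1n addn0.
by rewrite (inj_eq lift_inj) (negbTE hj).
Qed.

Lemma core_coef N k0 (ns : 'I_N -> nat) K (M : 'X_{1..N.+1}) :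
  (forall i, ns i < K)%N -> (forall i, M (lift ord0 i) < K)%N ->
  ('X_ord0 ^+ k0 * \prod_i ('X_ord0 + 'X_(lift ord0 i)) ^+ ns i : {mpoly rat[N.+1]})@_M =
  (\prod_i ('C(ns i, M (lift ord0 i)))%:R) *
     ((M ord0 == k0 + \sum_i (ns i - M (lift ord0 i)))%N)%:R.
Proof.
move=> hK hM; rewrite (@core_exp N k0 ns K hK) raddf_sum /=.
pose g0 : {ffun 'I_N -> 'I_K} := [ffun i => Ordinal (hM i)].
have g0E i : nat_of_ord (g0 i) = M (lift ord0 i) by rewrite ffunE.
rewrite (bigD1 g0) //= [X in _ + X = _]big1 ?addr0 => [|g hg]; last first.
  rewrite mcoeffZ mcoeffX; case: eqP => [hm|]; last by rewrite mulr0.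
  case/eqP: hg; apply/ffunP => i; apply: val_inj; rewrite ffunE /= -hm mon_l //.
rewrite mcoeffZ mcoeffX; congr (_ * _%:R).
  by apply: eq_bigr => i _; rewrite g0E.
congr (nat_of_bool _); apply/idP/idP => [/eqP hm|/eqP h].
  by rewrite -hm mon_x0; apply/eqP; congr (_ + _)%N; apply: eq_bigr => i _; rewrite mon_l.
apply/eqP.
apply/mnmP => j; case: (unliftP ord0 j) => [i ->|->].
  by rewrite mon_l g0E.
by rewrite mon_x0 h; congr (_ + _)%N; apply: eq_bigr => i _; rewrite g0E.
Qed.

Lemma leq_sum1 n (F : 'I_n -> nat) i : (F i <= \sum_j F j)%N.
Proof. by rewrite (bigD1 i) //= leq_addr. Qed.

Lemma lhs_coef N (k : {ffun 'I_N.+1 -> nat}) (m : mono N.+1) :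
  lhs_term N k m = (((\sum_(j < N.+1) k j) + N)`!)%:R^-1 *
    ((\prod_i ('C(k (lift ord0 i), m (lift ord0 i)))%:R) *
     ((m ord0 == k ord0 + \sum_i (k (lift ord0 i) - m (lift ord0 i)))%N)%:R).
Proof.
have hr : rel (lhs_term N k) ((((\sum_(j < N.+1) k j) + N)`!)%:R^-1 *:
    ('X_ord0 ^+ k ord0 * \prod_i ('X_ord0 + 'X_(lift ord0 i)) ^+ k (lift ord0 i))).
  apply: rel_scale; apply: rel_mul; first exact/rel_pow/rel_var.
  by apply: rel_prod => i; apply/rel_pow/rel_add; apply: rel_var.
rewrite hr /phi mcoeffZ (@core_coef N (k ord0) (fun i => k (lift ord0 i)) (\sum_j k j + Defs.mdeg m).+1).
- have tE j : toM m j = m j by rewrite mnmE.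
  rewrite tE; congr (_ * (_ * _)); first by apply: eq_bigr => i _; rewrite tE.
  by congr (nat_of_bool (_ == (_ + _)%N))%:R; apply: eq_bigr => i _; rewrite tE.
- by move=> i; rewrite ltnS (leq_trans (@leq_sum1 _ k (lift ord0 i))) // leq_addr.
- by move=> i; rewrite mnmE ltnS (leq_trans (@leq_sum1 _ m (lift ord0 i))) // leq_addl.
Qed.

Definition bp N (m : mono N.+1) (i : 'I_N.+1) : nat := if i == ord0 then 0%N else m i.
Arguments bp {N} m i.

Lemma bp_l N (m : mono N.+1) i : bp m (lift ord0 i) = m (lift ord0 i).
Proof. by rewrite /bp lift0_neq. Qed.

Lemma bp_sum N (m : mono N.+1) : (\sum_i bp m i + m ord0 = Defs.mdeg m)%N.
Proof.
rewrite /Defs.mdeg !big_ord_recl /bp eqxx add0n addnC; congr (_ + _)%N; apply: eq_bigr => i _; rewrite lift0_neq.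
Qed.

Lemma lhs_coef2 N (k : {ffun 'I_N.+1 -> nat}) (m : mono N.+1) :
  lhs_term N k m = (((\sum_(j < N.+1) k j) + N)`!)%:R^-1 *
    ((\prod_i ('C(k i, bp m i))%:R) *
     ((\sum_i (k i - bp m i) == m ord0)%N)%:R).
Proof.
rewrite lhs_coef big_ord_recl [in X in _ = _ * (_ * X)]big_ord_recl.
rewrite [X in _ = _ * (X * _)]big_ord_recl {2 3}/bp eqxx bin0 mul1r subn0 eq_sym.
congr (_ * (_ * (nat_of_bool (_ == _))%:R)).
Qed.

Lemma lhs_coef3 N (k : {ffun 'I_N.+1 -> nat}) (m : mono N.+1) :
  lhs_term N k m = ((Defs.mdeg m + N)`!)%:R^-1 *
    ((\prod_i ('C(k i, bp m i))%:R) *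
     ((\sum_i (k i - bp m i) == m ord0)%N)%:R).
Proof.
rewrite lhs_coef2; have [h|h] := boolP [forall i, (bp m i <= k i)%N].
  case: eqP => hs; last by rewrite !mulr0.
  have -> : (\sum_j k j = Defs.mdeg m)%N.
    rewrite -bp_sum -hs -big_split /=; apply: eq_bigr => i _.
    by rewrite addnC subnK //; exact: (forallP h).
  by [].
move: h; rewrite negb_forall => /existsP [i]; rewrite -ltnNge => hi.
have h0 : \prod_i ('C(k i, bp m i))%:R = 0 :> rat by rewrite (bigD1 i) //= bin_small // mul0r.
by rewrite h0 !mul0r !mulr0.
Qed.

Lemma lhs_supp N (k : {ffun 'I_N.+1 -> nat}) (m : mono N.+1) :
  lhs_term N k m != 0 -> forall i, (k i <= Defs.mdeg m)%N.
Proof.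
rewrite lhs_coef2 => hne i.
have h : [forall i, (bp m i <= k i)%N].
  apply/forallP => j; rewrite leqNgt; apply/negP => hj; move: hne.
  have h0 : \prod_i ('C(k i, bp m i))%:R = 0 :> rat by rewrite (bigD1 j) //= bin_small // mul0r.
  by rewrite h0 !mul0r !mulr0 eqxx.
have hs : (\sum_i (k i - bp m i) == m ord0)%N.
  by apply: contraNT hne => /negbTE ->; rewrite !mulr0.
rewrite -bp_sum -(eqP hs) -big_split /=.
rewrite (eq_bigr (fun j => k j)) ?(@leq_sum1 _ k) // => j _.
by rewrite addnC subnK //; apply: (forallP h).
Qed.

Lemma exp_coef N j (d : mono N.+1) :
  exp_term N j d = (j`!)%:R^-1 * ((d ord0 == j) && [forall i, d (lift ord0 i) == 0%N])%:R.
Proof.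
have hr : rel (exp_term N j) ((j`!)%:R^-1 *: 'X_ord0 ^+ j).
  by apply: rel_scale; apply/rel_pow/rel_var.
rewrite hr /phi mcoeffZ Xpow mcoeffX; congr (_ * (nat_of_bool _)%:R).
apply/eqP/andP => [h|[/eqP h0 /forallP h1]].
  split; first by rewrite -[d ord0](mnmE d) -/(toM d) -h mulmnE mnm1E eqxx mul1n.
  by apply/forallP => i; rewrite -[d _](mnmE d) -/(toM d) -h mulmnE mnm1E lift0_neq'.
apply/mnmP => i; rewrite mulmnE mnm1E mnmE; case: (unliftP ord0 i) => [i' ->|->].
  by rewrite lift0_neq' (eqP (h1 i')).
by rewrite eqxx mul1n h0.
Qed.

Lemma rhs_coef N (k : {ffun 'I_N -> nat}) (d : mono N.+1) :
  rhs_term N k d = (((\sum_(i < N) (k i).+1)`!)%:R^-1) *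
    ((d ord0 == 0%N) && [forall i, d (lift ord0 i) == k i])%:R.
Proof.
have hr : rel (rhs_term N k) ((((\sum_(i < N) (k i).+1)`!)%:R^-1) *:
     \prod_i (1 *: 'X_[U_(lift ord0 i) *+ k i])).
  apply: rel_scale; apply: rel_prod => i; rewrite scale1r -Xpow.
  by apply/rel_pow/rel_var.
rewrite hr /phi mcoeffZ prod_sX mcoeffZ mcoeffX big1_eq mul1r.
congr (_ * (nat_of_bool _)%:R).
have cE (i : 'I_N.+1) : ((\sum_i0 U_(lift ord0 i0) *+ k i0)%MM i = 
    if unlift ord0 i is Some i' then k i' else 0)%N.
  rewrite mnm_sumE; case: (unliftP ord0 i) => [i' ->|->].
    rewrite (bigD1 i') //= big1 => [|j hj]; rewrite mulmnE mnm1E.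
      by rewrite eqxx mul1n addn0.
    by rewrite (inj_eq lift_inj) (negbTE hj).
  rewrite big1 // => j _; by rewrite mulmnE mnm1E lift0_neq.
apply/eqP/andP => [h|[/eqP h0 /forallP h1]].
  split; first by rewrite -[d ord0](mnmE d) -/(toM d) -h cE unlift_none.
  by apply/forallP => i; rewrite -[d _](mnmE d) -/(toM d) -h cE liftK.
apply/mnmP => i; rewrite cE mnmE; case: (unliftP ord0 i) => [i' ->|->].
  by rewrite (eqP (h1 i')).
by rewrite h0.
Qed.

Lemma prod_coef n K (c : 'I_n -> nat -> rat) (e : 'I_n -> nat -> nat) a :
  (\prod_(i < n) \sum_(j < K) c i j *: 'X^(e i j))`_a =
  \sum_(f : {ffun 'I_n -> 'I_K}) (\prod_i c i (f i)) * ((\sum_i e i (f i) == a)%N)%:R.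
Proof.
rewrite bigA_distr_bigA /= coef_sum; apply: eq_bigr => f _.
have -> : \prod_i (c i (f i) *: 'X^(e i (f i))) = (\prod_i c i (f i)) *: 'X^(\sum_i e i (f i)) :> {poly rat}.
  apply: (big_rec3 (fun (p : {poly rat}) (x : rat) (y : nat) => p = x *: 'X^y)).
    by rewrite scale1r.
  by move=> i p x y _ ->; rewrite exprD -scalerAl -scalerAr scalerA.
by rewrite coefZ coefXn eq_sym.
Qed.

Lemma factor_A b D : (b <= D.+1)%N ->
  \sum_(j < D.+1) ('C(j, b))%:R *: 'X^(j - b) = A b (D.+1 - b).
Proof.
move=> hb; rewrite -(big_mkord xpredT (fun j => ('C(j, b))%:R *: 'X^(j - b))).
rewrite (@big_cat_nat _ _ _ b 0 D.+1 _ _ (leq0n b) hb) /= big_nat_cond big1 ?add0r; last first.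
  by move=> j /andP[/andP[_ hj] _]; rewrite bin_small // scale0r.
rewrite -{1}[b]add0n big_addn /A big_mkord; apply: eq_bigr => i _.
have h := @bin_sub (b + i) b (leq_addr i b); rewrite addKn in h.
by rewrite addnK h addnC.
Qed.

Definition Lf N (m : mono N.+1) : rat :=
  \sum_(f : {ffun 'I_N.+1 -> 'I_(Defs.mdeg m).+1}) lhs_term N [ffun i => nat_of_ord (f i)] m.

Lemma L_val N (m : mono N.+1) : Lf N m =
  ((Defs.mdeg m + N)`!)%:R^-1 * ('C(\sum_i bp m i + N + m ord0, m ord0))%:R.
Proof.
rewrite /Lf; apply: etrans; first by apply: eq_bigr => f _; rewrite lhs_coef3.
rewrite -mulr_sumr; congr (_ * _).
set D := Defs.mdeg m; set a := m ord0.
have hb i : (bp m i <= D.+1)%N.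
  by apply: leqW; rewrite /D -bp_sum (leq_trans (@leq_sum1 _ (bp m) i)) ?leq_addr.
have -> : \sum_(f : {ffun 'I_N.+1 -> 'I_D.+1})
    (\prod_i ('C([ffun i => nat_of_ord (f i)] i, bp m i))%:R) *
    ((\sum_i ([ffun i => nat_of_ord (f i)] i - bp m i) == a)%N)%:R =
    (\prod_(i < N.+1) \sum_(j < D.+1) ('C(j, bp m i))%:R *: 'X^(j - bp m i) : {poly rat})`_a.
  rewrite (@prod_coef N.+1 D.+1 (fun i j => ('C(j, bp m i))%:R) (fun i j => (j - bp m i)%N) a); apply: eq_bigr => f _.
  have -> : (\sum_i ([ffun i => nat_of_ord (f i)] i - bp m i) = \sum_i (f i - bp m i))%N.
    by apply: eq_bigr => i _; rewrite ffunE.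
  by congr (_ * _); apply: eq_bigr => i _; rewrite ffunE.
rewrite (eq_bigr _ (fun i _ => @factor_A (bp m i) D (hb i))).
have hT i : (a.+1 <= D.+1 - bp m i)%N.
  rewrite leq_subRL ?hb // addnS ltnS /D -bp_sum leq_add2r.
  exact: (@leq_sum1 _ (bp m) i).
rewrite (eqm_coef (vander (bp m) (fun i => (D.+1 - bp m i)%N) (ltn0Sn a) hT) (ltnSn a)).
by rewrite A_coef.
Qed.

Definition Ef N (d : mono N.+1) : rat := exp_term N (d ord0) d.
Definition Sf N (d : mono N.+1) : rat := rhs_term N [ffun i => d (lift ord0 i)] d.

Lemma Ef_val N d : Ef N d = ((d ord0)`!)%:R^-1 * ([forall i, d (lift ord0 i) == 0%N])%:R.
Proof. by rewrite /Ef exp_coef eqxx. Qed.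

Lemma Sf_val N d : Sf N d = ((\sum_i (d (lift ord0 i)).+1)`!)%:R^-1 * (d ord0 == 0%N)%:R.
Proof.
rewrite /Sf rhs_coef; have -> : [forall i, d (lift ord0 i) == [ffun i => d (lift ord0 i)] i].
  by apply/forallP => i; rewrite ffunE.
rewrite andbT; congr ((_`!)%:R^-1 * _); apply: eq_bigr => i _; by rewrite ffunE.
Qed.

Lemma ES_val N (m : mono N.+1) : ps_mul (@Ef N) (@Sf N) m =
  ((m ord0)`!)%:R^-1 * ((\sum_i (m (lift ord0 i)).+1)`!)%:R^-1.
Proof.
rewrite /ps_mul.
set D := Defs.mdeg m.
have haD : (m ord0 < D.+1)%N by rewrite ltnS /D -bp_sum leq_addl.
pose d0 : {ffun 'I_N.+1 -> 'I_D.+1} := [ffun i => if i == ord0 then Ordinal haD else ord0].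
have d0E i : nat_of_ord (d0 i) = if i == ord0 then m ord0 else 0%N.
  by rewrite ffunE; case: ifP.
have hd0 : [forall i, (d0 i <= m i)%N].
  by apply/forallP => i; rewrite d0E; case: eqP => [->|].
rewrite (bigD1 d0) //= big1 ?addr0 => [|d /andP[/forallP hd hne]]; last first.
  rewrite Ef_val Sf_val ffunE /=.
  case: (boolP [forall i, _]) => [/forallP h1|]; last by rewrite !mulr0 mul0r.
  case: eqP => [h2|]; last by rewrite !mulr0.
  case/eqP: hne; apply/ffunP => i; apply: val_inj; rewrite /= d0E.
  case: (unliftP ord0 i) => [i' ->|->].
    by have := h1 i'; rewrite ffunE lift0_neq => /eqP.
  rewrite eqxx; apply/eqP; rewrite eqn_leq hd /=.
  by move: h2; rewrite ffunE => /eqP; rewrite subn_eq0.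
rewrite Ef_val Sf_val !ffunE /= subnn eqxx mulr1.
have -> : [forall i, [ffun i => nat_of_ord (d0 i)] (lift ord0 i) == 0%N].
  by apply/forallP => i; rewrite ffunE d0E lift0_neq.
rewrite mulr1; congr (_ * _); congr ((_`!)%:R^-1); apply: eq_bigr => i _.
by rewrite ffunE d0E lift0_neq subn0.
Qed.

Lemma bp_sum' N (m : mono N.+1) : (\sum_i bp m i = \sum_(i < N) m (lift ord0 i))%N.
Proof.
rewrite big_ord_recl /bp eqxx add0n; apply: eq_bigr => i _; by [].
Qed.

Lemma final_eq N (m : mono N.+1) : Lf N m = ps_mul (@Ef N) (@Sf N) m.
Proof.
rewrite L_val ES_val.
set a := m ord0; set B0 := (\sum_(i < N) m (lift ord0 i))%N.
have h1 : (\sum_i (m (lift ord0 i)).+1 = B0 + N)%N.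
  rewrite (eq_bigr (fun i => m (lift ord0 i) + 1)%N); last by move=> i _; rewrite addn1.
  by rewrite big_split /= sum_nat_const card_ord muln1.
have h2 : (Defs.mdeg m + N = (B0 + N) + a)%N.
  by rewrite -bp_sum bp_sum' -/B0 -/a addnAC.
rewrite h1 h2 bp_sum' -/B0.
set X := (B0 + N)%N.
have hf := bin_fact (leq_addl X a); rewrite addnK in hf.
rewrite -hf !natrM.
have hC : ('C(X + a, a))%:R != 0 :> rat by rewrite pnatr_eq0 -lt0n bin_gt0 leq_addl.
have ha : (a`!)%:R != 0 :> rat by rewrite pnatr_eq0 -lt0n fact_gt0.
have hX : (X`!)%:R != 0 :> rat by rewrite pnatr_eq0 -lt0n fact_gt0.
field; rewrite hC ha hX //.
Qed.

Theorem lemma1 (N : nat) :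
  exists (L E S : ps N.+1),
    [/\ has_sum (@lhs_term N) L, has_sum (@exp_term N) E,
        has_sum (@rhs_term N) S & forall m, L m = ps_mul E S m].
Proof.
exists (@Lf N), (@Ef N), (@Sf N); split.
- move=> m; set D := Defs.mdeg m.
  pose fk (f : {ffun 'I_N.+1 -> 'I_D.+1}) : {ffun 'I_N.+1 -> nat} := [ffun i => nat_of_ord (f i)].
  have fk_inj : injective fk.
    move=> f g /ffunP h; apply/ffunP => i; apply: val_inj; have := h i; by rewrite !ffunE.
  exists (map fk (enum {ffun 'I_N.+1 -> 'I_D.+1})); split.
  + by rewrite map_inj_uniq // enum_uniq.
  + move=> k /lhs_supp hk.
    have -> : k = fk [ffun i => inord (k i)].
      by apply/ffunP => i; rewrite !ffunE inordK // ltnS hk.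
    by apply: map_f; rewrite mem_enum.
  + by rewrite big_map big_enum.
- move=> d; exists [:: d ord0]; split => //.
  + move=> j; rewrite exp_coef; case: (boolP (_ && _)) => [/andP[/eqP -> _]|].
      by move=> _; rewrite inE.
    by move=> _; rewrite mulr0 eqxx.
  + by rewrite big_seq1.
- move=> d; exists [:: [ffun i => d (lift ord0 i)]]; split => //.
  + move=> k; rewrite rhs_coef; case: (boolP (_ && _)) => [/andP[_ /forallP h]|].
      move=> _; rewrite inE; apply/eqP/ffunP => i; rewrite ffunE; exact/esym/eqP/h.
    by move=> _; rewrite mulr0 eqxx.
  + by rewrite big_seq1.
- exact: final_eq.
Qed.
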